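(* Let $\mathfrak g$ be a Lie algebra over a field $\mathbb k$ and $(X,\Delta,q)$ its associated binary SD object. Define $\Psi^2$ on Lie $2$-cochains by $\Psi^2(\phi)((a,x)\otimes(b,y))=(0,\phi(x,y))$. Then $\Psi^2$ maps $Z^2_{\rm Lie}(\mathfrak g;\mathfrak g)$ into $Z^2_{\rm BSD}(X;X)$ and $B^2_{\rm Lie}(\mathfrak g;\mathfrak g)$ into $B^2_{\rm BSD}(X;X)$, hence induces a well-defined homomorphism $H^2_{\rm Lie}(\mathfrak g;\mathfrak g)\to H^2_{\rm BSD}(X;X)$.
   Context: Associated binary SD object: $X=\mathbb k\oplus\mathfrak g$ (elements $(a,x)$), $\Delta(a,x)=(a,x)\otimes(1,0)+(1,0)\otimes(0,x)$, $\varepsilon(a,x)=a$, $q((a,x)\otimes(b,y))=(ab,\,bx+[x,y])$. Sweedler notation $\Delta(w)=w^{(1)}\otimes w^{(2)}$; $\tau$ is the flip $u\otimes v\mapsto v\otimes u$. BSD cohomology: $C^1_{\rm BSD}(X;X)$ = linear $f\colon X\to X$ with $\Delta f=(f\otimes\mathbb 1+\mathbb 1\otimes f)\Delta$; $C^2_{\rm BSD}(X;X)$ = linear $\phi\colon X\otimes X\to X$ with $\Delta\phi=(\phi\otimes q+q\otimes\phi)(\mathbb 1\otimes\tau\otimes\mathbb 1)(\Delta\otimes\Delta)$; $\delta^1f(u\otimes v)=f(q(u\otimes v))-q(f(u)\otimes v)-q(u\otimes f(v))$; $\delta^2\phi(u\otimes v\otimes w)=q(\phi(u\otimes v)\otimes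 w)+\phi(q(u\otimes v)\otimes w)-\phi(q(u\otimes w^{(1)})\otimes q(v\otimes w^{(2)}))-q(\phi(u\otimes w^{(1)})\otimes q(v\otimes w^{(2)}))-q(q(u\otimes w^{(1)})\otimes\phi(v\otimes w^{(2)}))$; $Z^2_{\rm BSD}=C^2_{\rm BSD}\cap\ker\delta^2$, $B^2_{\rm BSD}=\delta^1(C^1_{\rm BSD})$, $H^2_{\rm BSD}=Z^2_{\rm BSD}/B^2_{\rm BSD}$. Lie cohomology: $2$-cochains are alternating bilinear $\phi\colon\mathfrak g\times\mathfrak g\to\mathfrak g$; $\delta^2\phi(x,y,z)=[\phi(x,y),z]+[\phi(y,z),x]+[\phi(z,x),y]+\phi([x,y],z)+\phi([y,z],x)+\phi([z,x],y)$; for linear $f\colon\mathfrak g\to\mathfrak g$, $\delta^1f(x,y)=f([x,y])-[f(x),y]-[x,f(y)]$; $Z^2_{\rm Lie}=\ker\delta^2$, $B^2_{\rm Lie}=\operatorname{im}\delta^1$, $H^2_{\rm Lie}=Z^2_{\rm Lie}/B^2_{\rm Lie}$. *)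

(* Defs.v *)
From HB Require Import structures.
From mathcomp Require Import all_boot all_order all_algebra.
Set Implicit Arguments. Unset Strict Implicit. Unset Printing Implicit Defensive.
Import GRing.Theory.
Local Open Scope ring_scope.

Section Defs.
Variable K : fieldType.

Definition lin (V W : lmodType K) (f : V -> W) : Prop :=
  forall (a : K) (u v : V), f (a *: u + v) = a *: f u + f v.

Definition bilin (V W U : lmodType K) (B : V -> W -> U) : Prop :=
  (forall (a : K) (v v' : V) (w : W), B (a *: v + v') w = a *: B v w + B v' w) /\
  (forall (a : K) (v : V) (w w' : W), B v (a *: w + w') = a *: B v w + B v w').

(* Elements of V (x) W are represented by finite formal sums  sum_i v_i (x) w_i
   (a seq of pairs); two such sums are equal in V (x) W iff every bilinear map
   out of V x W (into any K-vector space) takes the same value on them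
   (universal property of the tensor product). *)
Definition tensor_eq (V W : lmodType K) (s t : seq (V * W)) : Prop :=
  forall (U : lmodType K) (B : V -> W -> U), bilin B ->
    \sum_(p <- s) B p.1 p.2 = \sum_(p <- t) B p.1 p.2.

Definition is_lie_bracket (g : lmodType K) (br : g -> g -> g) : Prop :=
  [/\ bilin br,
      (forall x, br x x = 0) &
      (forall x y z, br x (br y z) + br y (br z x) + br z (br x y) = 0)].

Variable g : lmodType K.
Variable br : g -> g -> g.

Definition X : lmodType K := (K^o * g)%type.

Definition unitX : X := ((1 : K^o), (0 : g)).

Definition DeltaX (u : X) : seq (X * X) :=
  [:: (u, unitX); (unitX, ((0 : K^o), u.2))].

Definition epsX (u : X) : K := u.1.

Definition qX (u v : X) : X :=
  ((u.1 * v.1 : K^o), v.1 *: u.2 + br u.2 v.2).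

Definition C1_BSD (f : X -> X) : Prop :=
  lin f /\
  forall u : X,
    tensor_eq (DeltaX (f u))
      ([seq (f p.1, p.2) | p <- DeltaX u] ++ [seq (p.1, f p.2) | p <- DeltaX u]).

(* linear maps X (x) X -> X are represented by bilinear maps X -> X -> X *)
Definition C2_BSD (phi : X -> X -> X) : Prop :=
  bilin phi /\
  forall u v : X,
    tensor_eq (DeltaX (phi u v))
      ([seq (phi p.1 r.1, qX p.2 r.2) | p <- DeltaX u, r <- DeltaX v] ++
       [seq (qX p.1 r.1, phi p.2 r.2) | p <- DeltaX u, r <- DeltaX v]).

Definition delta1_BSD (f : X -> X) (u v : X) : X :=
  f (qX u v) - qX (f u) v - qX u (f v).

Definition delta2_BSD (phi : X -> X -> X) (u v w : X) : X :=
  qX (phi u v) w + phi (qX u v) w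
  - \sum_(p <- DeltaX w)
      (phi (qX u p.1) (qX v p.2) + qX (phi u p.1) (qX v p.2)
       + qX (qX u p.1) (phi v p.2)).

Definition Z2_BSD (phi : X -> X -> X) : Prop :=
  C2_BSD phi /\ forall u v w, delta2_BSD phi u v w = 0.

Definition B2_BSD (phi : X -> X -> X) : Prop :=
  exists f : X -> X, C1_BSD f /\ forall u v, phi u v = delta1_BSD f u v.

Definition Lie_cochain2 (phi : g -> g -> g) : Prop :=
  bilin phi /\ forall x, phi x x = 0.

Definition delta2_Lie (phi : g -> g -> g) (x y z : g) : g :=
  br (phi x y) z + br (phi y z) x + br (phi z x) y
  + phi (br x y) z + phi (br y z) x + phi (br z x) y.

Definition delta1_Lie (f : g -> g) (x y : g) : g :=
  f (br x y) - br (f x) y - br x (f y).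

Definition Z2_Lie (phi : g -> g -> g) : Prop :=
  Lie_cochain2 phi /\ forall x y z, delta2_Lie phi x y z = 0.

Definition B2_Lie (phi : g -> g -> g) : Prop :=
  exists f : g -> g, lin f /\ forall x y, phi x y = delta1_Lie f x y.

Definition Psi2 (phi : g -> g -> g) (u v : X) : X :=
  ((0 : K^o), phi u.2 v.2).

End Defs.

(* Main.v *)
Require Import Defs.
From mathcomp Require Import all_boot all_order all_algebra.
Import GRing.Theory.
Local Open Scope ring_scope.
Set Implicit Arguments.
From mathcomp Require Import ssrAC.

Lemma ac (V: zmodType) (p q A C D E F G : V): p + A + (q + D) - (p + F + (q + C) + (E + G)) = A - G - C + D - E - F.
Proof.
rewrite !opprD !addrA.
by rewrite (ACl ((1*5)*(3*7)*2*10*8*4*9*6)%AC) /= !subrr !add0r.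
Qed.


Lemma bil0l (K : fieldType) (V W U : lmodType K) (B : V -> W -> U) :
  bilin B -> forall w, B 0 w = 0.
Proof. move=> [H1 H2] w. have := H1 (-1) 0 0 w. by rewrite scaler0 addr0 scaleN1r addNr. Qed.
Lemma bil0r (K : fieldType) (V W U : lmodType K) (B : V -> W -> U) :
  bilin B -> forall v, B v 0 = 0.
Proof. move=> [H1 H2] v. have := H2 (-1) v 0 0. by rewrite scaler0 addr0 scaleN1r addNr. Qed.

Section S.
Variables (K : fieldType) (g : lmodType K) (br : g -> g -> g) (phi : g -> g -> g).
Hypothesis Hbr : bilin br.
Hypothesis Hphi : bilin phi.
Let E0 : ((0:K^o),(0:g)) = 0 :> X g. Proof. by []. Qed.
Let q11 : qX br (1,0) (1,0) = (1,0) :> X g.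
Proof. by rewrite /qX /= mulr1 scaler0 (bil0l Hbr) addr0. Qed.
Lemma t1 u v : tensor_eq (DeltaX (Psi2 phi u v))
      ([seq (Psi2 phi p.1 r.1, qX br p.2 r.2) | p <- DeltaX u, r <- DeltaX v] ++
       [seq (qX br p.1 r.1, Psi2 phi p.2 r.2) | p <- DeltaX u, r <- DeltaX v]).
Proof.
move=> U B HB. rewrite /DeltaX /Psi2 /unitX /=.
rewrite !big_cons !big_nil /= (bil0l Hphi) !(bil0r Hphi) E0 q11 !(bil0l HB) !(bil0r HB).
by rewrite !add0r !addr0.
Qed.
End S.

Section BL.
Variables (K : fieldType) (V W U : lmodType K) (B : V -> W -> U).
Hypothesis HB : bilin B.
Lemma BDl v v' w : B (v + v') w = B v w + B v' w.
Proof. by have := HB.1 1 v v' w; rewrite !scale1r. Qed.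
Lemma BDr v w w' : B v (w + w') = B v w + B v w'.
Proof. by have := HB.2 1 v w w'; rewrite !scale1r. Qed.
Lemma BZl a v w : B (a *: v) w = a *: B v w.
Proof. by have := HB.1 a v 0 w; rewrite !addr0 (bil0l HB) addr0. Qed.
Lemma BZr a v w : B v (a *: w) = a *: B v w.
Proof. by have := HB.2 a v w 0; rewrite !addr0 (bil0r HB) addr0. Qed.
Lemma BNl v w : B (- v) w = - B v w.
Proof. by rewrite -scaleN1r BZl scaleN1r. Qed.
Lemma BNr v w : B v (- w) = - B v w.
Proof. by rewrite -scaleN1r BZr scaleN1r. Qed.
End BL.
Lemma anti (K : fieldType) (V U : lmodType K) (B : V -> V -> U) :
  bilin B -> (forall x, B x x = 0) -> forall x y, B x y = - B y x.
Proof.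
move=> HB Ha x y; have := Ha (x + y).
rewrite (BDl HB) !(BDr HB) !Ha add0r addr0 => /eqP; rewrite addr_eq0 => /eqP //.
Qed.


Section S2.
Variables (K : fieldType) (g : lmodType K) (br : g -> g -> g) (phi : g -> g -> g).
Hypothesis Hbr : bilin br.
Hypothesis Hbra : forall x, br x x = 0.
Hypothesis Hphi : bilin phi.
Hypothesis Hphia : forall x, phi x x = 0.
Lemma t2 u v w : delta2_Lie br phi u.2 v.2 w.2 = 0 -> delta2_BSD br (Psi2 phi) u v w = 0.
Proof.
case: u => a x; case: v => b y; case: w => c z.
rewrite /delta2_BSD /DeltaX /Psi2 /qX /unitX /= !big_cons big_nil /= => H.
apply: injective_projections => /=.
  by rewrite !mul0r !mulr0 !addr0 subrr.
rewrite !(bil0r Hbr) !(bil0r Hphi) !(bil0l Hbr) !scale0r !mulr0 !mulr1 !scale1r !addr0 !add0r.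
rewrite !(BDl Hphi) !(BZl Hphi).
move: H; rewrite /delta2_Lie /=.
rewrite (anti Hphi Hphia z x) (BNl Hbr) (anti Hbr Hbra (phi y z)) (anti Hphi Hphia (br y z)).
rewrite (anti Hbr Hbra z x) (BNl Hphi).
rewrite !(bil0r Hbr) !scaler0 !addr0 => H.
by rewrite ac -H.
Qed.
End S2.

Section S3.
Variables (K : fieldType) (g : lmodType K) (br : g -> g -> g) (f : g -> g).
Hypothesis Hbr : bilin br.
Hypothesis Hf : lin f.
Definition Ff (u : X g) : X g := ((0:K^o), f u.2).
Lemma f0 : f 0 = 0.
Proof. by have := Hf (-1) 0 0; rewrite scaler0 addr0 scaleN1r addNr. Qed.
Lemma C1F : C1_BSD Ff.
Proof.
split.
  move=> a u v; apply: injective_projections => /=; first by rewrite addr0 scaler0.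
  by rewrite -Hf.
move=> u U B HB; rewrite /DeltaX /Ff /unitX /= !big_cons !big_nil /= f0.
have E0 : ((0:K^o),(0:g)) = 0 :> X g by [].
by rewrite E0 (bil0l HB) (bil0r HB) !addr0 !add0r.
Qed.
Lemma d1F u v : Psi2 (delta1_Lie br f) u v = delta1_BSD br Ff u v.
Proof.
case: u => a x; case: v => b y.
rewrite /delta1_BSD /Psi2 /Ff /qX /delta1_Lie /=.
apply: injective_projections => /=; first by rewrite !mul0r !mulr0 !subr0.
rewrite Hf scale0r add0r opprD addrA.
by rewrite (ACl ((1*3)*2*4*5)%AC) /= subrr add0r.
Qed.
End S3.

Lemma part1 (K : fieldType) (g : lmodType K) (br : g -> g -> g)
    (Hlie : is_lie_bracket br) phi : Z2_Lie br phi -> Z2_BSD br (Psi2 phi).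
Proof.
case: Hlie => Hbr Hbra _ [[Hphi Hphia] Hd].
split; last by move=> u v w; apply: t2 => //.
split; last exact: t1.
split.
  move=> a u v w; apply: injective_projections => /=; first by rewrite addr0 scaler0.
  by rewrite Hphi.1.
move=> a u v w; apply: injective_projections => /=; first by rewrite addr0 scaler0.
by rewrite Hphi.2.
Qed.

Lemma part2 (K : fieldType) (g : lmodType K) (br : g -> g -> g)
    (Hlie : is_lie_bracket br) phi : B2_Lie br phi -> B2_BSD br (Psi2 phi).
Proof.
case: Hlie => Hbr _ _ [f [Hf E]].
exists (Ff f); split; first exact: C1F.
move=> u v; rewrite -d1F //; rewrite /Psi2 E //.
Qed.

Theorem mainTheorem4 (K : fieldType) (g : lmodType K) (br : g -> g -> g)
    (Hlie : is_lie_bracket br) :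
  (forall phi : g -> g -> g, Z2_Lie br phi -> Z2_BSD br (Psi2 phi)) /\
  (forall phi : g -> g -> g, B2_Lie br phi -> B2_BSD br (Psi2 phi)) /\
  (* hence the induced map H^2_Lie -> H^2_BSD is well defined and additive/linear *)
  (forall phi phi' : g -> g -> g, Z2_Lie br phi -> Z2_Lie br phi' ->
     B2_Lie br (fun x y => phi x y - phi' x y) ->
     B2_BSD br (fun u v => Psi2 phi u v - Psi2 phi' u v)) /\
  (forall (a : K) (phi phi' : g -> g -> g) (u v : X g),
     Psi2 (fun x y => a *: phi x y + phi' x y) u v
     = a *: Psi2 phi u v + Psi2 phi' u v).
Proof.
split; first exact: part1.
split; first exact: part2.
split.
  move=> phi phi' _ _ /(part2 Hlie) [F [HF E]].
  exists F; split => // u v; rewrite -E.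
  by apply: injective_projections => /=; rewrite ?subrr.
move=> a phi phi' u v.
by apply: injective_projections => /=; rewrite ?scaler0 ?addr0.
Qed.
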